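(* Let $f:\mathbb{R}^\ell\times\mathbb{R}^m\to\mathbb{R}^\ell$ be $C^1$, let $\Lambda$ be a parameter shift with limits $\lambda_\pm$, and let $X$ define a stable path. Let $N\in\mathbb{N}$ be such that $\|[D_xf(X(s),\Lambda(s))]^n\|<\frac14$ for all $s\in\mathbb{R}$ and all $n\ge N$. Then for all sufficiently small $\epsilon>0$, $F_0^n(\mathcal{N}_\epsilon)\subset\mathcal{N}_{\epsilon/3}$ for all $n\in\{N,N+1,\ldots,N(N+1)\}$.
   Context: A parameter shift is a $C^1$ function $\Lambda:\mathbb{R}\to\mathbb{R}^m$ with $\lim_{s\to\pm\infty}\Lambda(s)=\lambda_\pm$ and $\lim_{s\to\pm\infty}\Lambda'(s)=0$. A stable path is given by $X:\mathbb{R}\to\mathbb{R}^\ell$ such that: $X(s)$ is a fixed point of $f(\cdot,\Lambda(s))$ for every $s$; $\{(s,X(s))\}$ is a connected curve; the limits $X_\pm=\lim_{s\to\pm\infty}X(s)$ exist and are fixed points of $f(\cdot,\lambda_\pm)$; and the spectral radius of $D_xf(X(s),\Lambda(s))$ is $<1$ for all $s\in\mathbb{R}\cup\{\pm\infty\}$ (with $X(\pm\infty)=X_\pm$, $\Lambda(\pm\infty)=\lambda_\pm$). For $r\ge0$, $F_r:\mathbb{R}^{\ell+1}\to\mathbb{R}^{\ell+1}$ is $F_r(s,x)=(s+r,f(x,\Lambda(s)))$, and $F_r^n$ is its $n$-fold composition. For $\epsilon>0$, $\mathcal{N}_\epsilon=\{(s,x):s\in\mathbb{R},\ \|x-X(s)\|\le\epsilon\}$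 (Euclidean norm; matrix norms are the induced norms). *)

(* Defs.v *)
From HB Require Import structures.
From mathcomp Require Import all_boot all_order all_algebra.
From mathcomp Require Import all_classical all_reals.
From mathcomp Require Import topology normedtype derive.
From mathcomp Require Import complex.
Import Order.TTheory GRing.Theory Num.Theory.
Import numFieldNormedType.Exports.

Set Implicit Arguments.
Unset Strict Implicit.
Unset Printing Implicit Defensive.

Local Open Scope classical_set_scope.
Local Open Scope ring_scope.

Section Defs.
Variable R : realType.

Definition enorm n (v : 'cV[R]_n) : R := Num.sqrt (\sum_i v i 0 ^+ 2).

Definition opnorm n (A : 'M[R]_n) : R :=
  sup [set enorm (A *m v) | v in [set v : 'cV[R]_n | enorm v <= 1]].

Definition spectral_radius n (A : 'M[R]_n) : R :=
  sup [set r : R | exists2 mu : complex.complex R,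
         eigenvalue (map_mx (fun a : R => complex.Complex a 0) A) mu
       & `|mu| = complex.Complex r 0].

Definition jacobian p q (F : 'cV[R]_p -> 'cV[R]_q) (z : 'cV[R]_p) : 'M[R]_(q, p) :=
  \matrix_(i < q, j < p) ('d F z (delta_mx j 0 : 'cV[R]_p)) i 0.

Definition C1 p q (F : 'cV[R]_p -> 'cV[R]_q) : Prop :=
  (forall z, differentiable F z) /\ continuous (jacobian F).

Definition uncurry_f l m (f : 'cV[R]_l -> 'cV[R]_m -> 'cV[R]_l)
  : 'cV[R]_(l + m) -> 'cV[R]_l := fun z => f (usubmx z) (dsubmx z).

Definition Dxf l m (f : 'cV[R]_l -> 'cV[R]_m -> 'cV[R]_l) x lam : 'M[R]_l :=
  lsubmx (jacobian (uncurry_f f) (col_mx x lam)).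

Definition parameter_shift m (Lam : R -> 'cV[R]_m) (lm lp : 'cV[R]_m) : Prop :=
  (forall s, derivable Lam s 1) /\ continuous (derive1 Lam) /\
  (Lam s @[s --> -oo] --> lm) /\ (Lam s @[s --> +oo] --> lp) /\
  ((derive1 Lam) s @[s --> -oo] --> 0) /\ ((derive1 Lam) s @[s --> +oo] --> 0).

Definition stable_path l m (f : 'cV[R]_l -> 'cV[R]_m -> 'cV[R]_l)
  (Lam : R -> 'cV[R]_m) (lm lp : 'cV[R]_m) (X : R -> 'cV[R]_l) : Prop :=
  (forall s, f (X s) (Lam s) = X s) /\
  connected [set p : R * 'cV[R]_l | p.2 = X p.1] /\
  exists Xm Xp : 'cV[R]_l,
    (X s @[s --> -oo] --> Xm) /\ (X s @[s --> +oo] --> Xp) /\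
    f Xm lm = Xm /\ f Xp lp = Xp /\
    (forall s, spectral_radius (Dxf f (X s) (Lam s)) < 1) /\
    spectral_radius (Dxf f Xm lm) < 1 /\ spectral_radius (Dxf f Xp lp) < 1.

Definition Fr l m (f : 'cV[R]_l -> 'cV[R]_m -> 'cV[R]_l) (Lam : R -> 'cV[R]_m)
  (r : R) (p : R * 'cV[R]_l) : R * 'cV[R]_l := (p.1 + r, f p.2 (Lam p.1)).

Definition Neps l (X : R -> 'cV[R]_l) (eps : R) : set (R * 'cV[R]_l) :=
  [set p | enorm (p.2 - X p.1) <= eps].

End Defs.

(* Main.v *)
Require Import Defs.
From HB Require Import structures.
From mathcomp Require Import all_boot all_order all_algebra.
From mathcomp Require Import all_classical all_reals.
From mathcomp Require Import topology normedtype derive.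
From mathcomp Require Import ring lra.
Import Order.TTheory GRing.Theory Num.Theory.
Import numFieldNormedType.Exports.
Local Open Scope classical_set_scope.
Local Open Scope ring_scope.
Set Implicit Arguments.
Unset Strict Implicit.

Section Norms.
Variable R : realType.

Lemma mxnorm_entry a b (M : 'M[R]_(a, b)) i j : `|M i j| <= `|M|.
Proof.
change (`|M i j| <= mx_norm M); rewrite mx_normrE.
by apply/bigmax_geP; right; exists (i, j).
Qed.

Lemma mxnorm_le a b (M : 'M[R]_(a, b)) c :
  0 <= c -> (forall i j, `|M i j| <= c) -> `|M| <= c.
Proof.
move=> c0 H; change (mx_norm M <= c); rewrite mx_normrE.
apply/bigmax_leP; split => // -[i j] _; exact: H.
Qed.

Lemma mxnorm_mul a b c (M : 'M[R]_(a, b)) (N : 'M[R]_(b, c)) :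
  `|M *m N| <= b%:R * `|M| * `|N|.
Proof.
apply: mxnorm_le; first by rewrite mulr_ge0 ?mulr_ge0 ?ler0n.
move=> i j; rewrite mxE.
apply: le_trans (ler_norm_sum _ _ _) _.
apply: (@le_trans _ _ (\sum_(k < b) `|M| * `|N|)).
  apply: ler_sum => k _; rewrite normrM; apply: ler_pM => //; exact: mxnorm_entry.
by rewrite sumr_const card_ord -mulrA mulr_natl.
Qed.

Lemma enorm_ge0 n (v : 'cV[R]_n) : 0 <= enorm v.
Proof. exact: sqrtr_ge0. Qed.

Lemma enorm_sq n (v : 'cV[R]_n) : enorm v ^+ 2 = \sum_i v i 0 ^+ 2.
Proof. by rewrite sqr_sqrtr // sumr_ge0 // => i _; rewrite sqr_ge0. Qed.

Lemma entry_le_enorm n (v : 'cV[R]_n) i : `|v i 0| <= enorm v.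
Proof.
rewrite -(ler_pXn2r (n:=2)) ?nnegrE ?enorm_ge0 //.
rewrite enorm_sq real_normK ?num_real //.
rewrite (bigD1 i) //= lerDl sumr_ge0 // => k _; exact: sqr_ge0.
Qed.

Lemma mxnorm_le_enorm n (v : 'cV[R]_n) : `|v| <= enorm v.
Proof.
apply: mxnorm_le; first exact: enorm_ge0.
by move=> i j; rewrite (ord1 j); exact: entry_le_enorm.
Qed.

Lemma enorm_le_mxnorm n (v : 'cV[R]_n) : enorm v <= n%:R * `|v|.
Proof.
rewrite -(ler_pXn2r (n:=2)) ?nnegrE ?enorm_ge0 ?mulr_ge0 ?ler0n //.
rewrite enorm_sq.
apply: (@le_trans _ _ (\sum_(i < n) `|v| ^+ 2)).
  apply: ler_sum => i _; rewrite -real_normK ?num_real // lerXn2r ?nnegrE //.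
  exact: mxnorm_entry.
rewrite sumr_const card_ord exprMn -[X in X <= _]mulr_natl.
apply: ler_wpM2r; first exact: sqr_ge0.
by rewrite -natrX ler_nat; case: n {v} => // k; rewrite expnS leq_pmulr.
Qed.

Lemma enorm_eq0 n (v : 'cV[R]_n) : enorm v = 0 -> v = 0.
Proof.
move=> H; apply/matrixP => i j; rewrite (ord1 j) mxE; apply/eqP.
by rewrite -normr_le0 -H entry_le_enorm.
Qed.

Lemma enorm0 n : enorm (0 : 'cV[R]_n) = 0.
Proof.
rewrite /enorm (eq_bigr (fun=> 0)) ?big1 ?sqrtr0 // => i _.
by rewrite mxE expr0n.
Qed.

Lemma enormZ n (a : R) (v : 'cV[R]_n) : enorm (a *: v) = `|a| * enorm v.
Proof.
rewrite /enorm (eq_bigr (fun i => a ^+ 2 * v i 0 ^+ 2)); last first.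
  by move=> i _; rewrite mxE exprMn.
by rewrite -mulr_sumr sqrtrM ?sqr_ge0 // sqrtr_sqr.
Qed.

Lemma enorm_CS n (a b : 'cV[R]_n) :
  \sum_i a i 0 * b i 0 <= enorm a * enorm b.
Proof.
have [a0|] := eqVneq (enorm a) 0.
  rewrite a0 mul0r (eq_bigr (fun=> 0)) ?big1 // => i _.
  by rewrite (enorm_eq0 a0) mxE mul0r.
have [b0|] := eqVneq (enorm b) 0.
  rewrite b0 mulr0 (eq_bigr (fun=> 0)) ?big1 // => i _.
  by rewrite (enorm_eq0 b0) mxE mulr0.
move=> bn0 an0.
have ea := enorm_ge0 a; have eb := enorm_ge0 b.
have H : 0 <= \sum_i (enorm b * a i 0 - enorm a * b i 0) ^+ 2.
  by apply: sumr_ge0 => i _; exact: sqr_ge0.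
have E : \sum_i (enorm b * a i 0 - enorm a * b i 0) ^+ 2 =
   2 * (enorm a * enorm b) * (enorm a * enorm b - \sum_i a i 0 * b i 0).
  rewrite (eq_bigr (fun i => enorm b ^+ 2 * a i 0 ^+ 2
     - (2 * enorm a * enorm b) * (a i 0 * b i 0) + enorm a ^+ 2 * b i 0 ^+ 2)).
    rewrite !big_split /= -!mulr_sumr sumrN -!mulr_sumr -!enorm_sq; ring.
  by move=> i _; ring.
rewrite E in H.
have P : 0 < 2 * (enorm a * enorm b).
  by rewrite mulr_gt0 // mulr_gt0 // lt_def ?an0 ?bn0.
by rewrite -subr_ge0 -(pmulr_rge0 _ P).
Qed.

Lemma enormD n (a b : 'cV[R]_n) : enorm (a + b) <= enorm a + enorm b.
Proof.
rewrite -(ler_pXn2r (n:=2)) ?nnegrE ?addr_ge0 ?enorm_ge0 //.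
rewrite enorm_sq (eq_bigr (fun i => a i 0 ^+ 2 + 2 * (a i 0 * b i 0) + b i 0 ^+ 2)).
  rewrite !big_split /= -mulr_sumr -!enorm_sq sqrrD.
  have := enorm_CS a b; lra.
by move=> i _; rewrite mxE; ring.
Qed.

Lemma enormN n (a : 'cV[R]_n) : enorm (- a) = enorm a.
Proof. by rewrite -scaleN1r enormZ normrN normr1 mul1r. Qed.

Lemma opnorm_bound n (A : 'M[R]_n) (v : 'cV[R]_n) :
  enorm (A *m v) <= opnorm A * enorm v.
Proof.
set S := [set enorm (A *m w) | w in [set w : 'cV[R]_n | enorm w <= 1]].
have hub : has_ubound S.
  exists (n%:R * (n%:R * `|A|)) => _ [w /= w1 <-].
  apply: le_trans (enorm_le_mxnorm _) _.
  rewrite ler_wpM2l ?ler0n //; apply: le_trans (mxnorm_mul _ _) _.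
  rewrite -[X in _ <= X]mulr1 ler_wpM2l ?mulr_ge0 ?ler0n //.
  exact: le_trans (mxnorm_le_enorm _) w1.
have [v0|vn0] := eqVneq (enorm v) 0.
  by rewrite (enorm_eq0 v0) mulmx0 enorm0 mulr0.
have vp : 0 < enorm v by rewrite lt_def vn0 enorm_ge0.
have : S (enorm (A *m ((enorm v)^-1 *: v))).
  exists ((enorm v)^-1 *: v) => //=.
  by rewrite enormZ ger0_norm ?invr_ge0 ?enorm_ge0 // mulVf.
move/(ub_le_sup hub); rewrite -scalemxAr enormZ ger0_norm ?invr_ge0 ?enorm_ge0 //.
by rewrite ler_pdivrMl // mulrC.
Qed.

End Norms.

Section Calc.
Variable R : realType.

Lemma cV_sum_delta n (h : 'cV[R]_n) : h = \sum_k h k 0 *: delta_mx k 0.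
Proof.
apply/matrixP => i j; rewrite (ord1 j) summxE (bigD1 i) //= big1.
  by rewrite !mxE !eqxx mulr1 addr0.
by move=> k ki; rewrite !mxE eq_sym (negbTE ki) mulr0.
Qed.

Lemma dF_jac p q (F : 'cV[R]_p -> 'cV[R]_q) z h :
  'd F z h = Defs.jacobian F z *m h.
Proof.
apply/matrixP => i j; rewrite (ord1 j) !mxE.
rewrite {1}(cV_sum_delta h) linear_sum summxE.
by apply: eq_bigr => k _; rewrite linearZ /= !mxE mulrC.
Qed.

Definition coordl q (i : 'I_q) : {linear 'cV[R]_q -> R}.
by exists (fun N : 'cV[R]_q => N i 0); do 2![eexists]; do ?[constructor];
     rewrite ?mxE// => ? *; rewrite ?mxE//; move=> ?; rewrite !mxE.
Defined.

Lemma coordlE q (i : 'I_q) N : coordl i N = N i 0.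
Proof. by []. Qed.

Lemma line_deriv p q (F : 'cV[R]_p -> 'cV[R]_q) (z h : 'cV[R]_p) (t : R) (i : 'I_q) :
  (forall w, differentiable F w) ->
  is_derive t 1 (fun u : R => F (u *: h + z) i 0)
     ((Defs.jacobian F (t *: h + z) *m h) i 0).
Proof.
move=> dF.
pose a := fun u : R => u *: h + z.
have da : is_diff t a (fun u => u *: h).
  have -> : (fun u : R => u *: h) = ( *:%R ^~ h) + 0 by apply/funext => u /=; rewrite addr0.
  rewrite /a; exact: is_diffD.
have dc : forall w, is_diff w (@coordl q i) (@coordl q i).
  move=> w; apply: DiffDef; first exact/linear_differentiable/coord_continuous.
  by rewrite diff_lin //; exact: coord_continuous.
have -> : (fun u : R => F (u *: h + z) i 0) = (@coordl q i) \o F \o a by [].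
have dg : differentiable ((@coordl q i) \o F \o a) t.
  apply: (@differentiable_comp _ _ _ _ a ((@coordl q i) \o F)).
    exact: ex_diff.
  apply: differentiable_comp => //; exact: ex_diff.
apply: DeriveDef; first exact: diff_derivable.
rewrite deriveE // diff_comp //; last by apply: differentiable_comp.
rewrite diff_comp // !diff_val /= scale1r.
by rewrite -dF_jac.
Qed.


Lemma near_ball (V : normedModType R) (x : V) (P : V -> Prop) :
  (\forall y \near x, P y) -> exists2 d : R, 0 < d & forall y, `|x - y| < d -> P y.
Proof.
move=> /nbhs_ballP [d /= d0 H]; exists d => // y xy; apply: H.
by rewrite -ball_normE /=.
Qed.

Lemma cont_eps (V W : normedModType R) (g : V -> W) x e :
  {for x, continuous g} -> 0 < e ->
  exists2 d : R, 0 < d & forall y, `|x - y| < d -> `|g x - g y| < e.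
Proof.
move=> /cvgrPdist_lt H e0; have := H _ e0; exact: near_ball.
Qed.

Lemma mvt_coord p q (F : 'cV[R]_p -> 'cV[R]_q) (z h : 'cV[R]_p) (i : 'I_q) :
  (forall w, differentiable F w) ->
  exists2 c : R, c \in `]0, 1[ &
    F (h + z) i 0 - F z i 0 = (Defs.jacobian F (c *: h + z) *m h) i 0.
Proof.
move=> dF.
have D := fun t : R => line_deriv z h t i dF.
have [|c c01 E] := @MVT R (fun u : R => F (u *: h + z) i 0)
   (fun t => (Defs.jacobian F (t *: h + z) *m h) i 0) 0 1 ltr01.
- apply: derivable_within_continuous => x _.
  by have [] := D x.
exists c => //; move: E; rewrite scale1r scale0r add0r subr0 mulr1 => ->.
by [].
Qed.

Lemma entryB a b (A B : 'M[R]_(a, b)) i j : (A - B) i j = A i j - B i j.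
Proof. by rewrite !mxE. Qed.

Lemma remainder_bound p q (F : 'cV[R]_p -> 'cV[R]_q) (z h : 'cV[R]_p) k :
  (forall w, differentiable F w) ->
  (forall c : R, c \in `]0, 1[ ->
      `|Defs.jacobian F (c *: h + z) - Defs.jacobian F z| <= k) ->
  0 <= k ->
  `|F (h + z) - F z - Defs.jacobian F z *m h| <= p%:R * k * `|h|.
Proof.
move=> dF Hc k0; apply: mxnorm_le; first by rewrite !mulr_ge0 ?ler0n.
move=> i j; rewrite (ord1 j).
have [c c01 E] := mvt_coord z h i dF.
rewrite !entryB E -entryB -mulmxBl.
apply: le_trans (mxnorm_entry _ _ _) _.
apply: le_trans (mxnorm_mul _ _) _.
by rewrite ler_wpM2r // ler_wpM2l ?ler0n // Hc.
Qed.

Lemma half_le (d : R) : 0 < d -> d / 2 <= d.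
Proof. move=> d0; lra. Qed.

Lemma aux_H1 (a b c d : R) : a < d / 2 -> b < d / 2 -> c * b <= b -> a + c * b < d.
Proof. move=> *; lra. Qed.

Lemma subDA (V : zmodType) (x y w : V) : x - (y + w) = x - w - y.
Proof. by rewrite opprD addrA addrAC. Qed.

Lemma dist_tri (V : normedZmodType R) (a b c : V) : `|a - b| <= `|c - a| + `|c - b|.
Proof.
rewrite (_ : a - b = (c - b) - (c - a)); last by rewrite opprB [RHS]addrC -[RHS]addrA addKr.
by rewrite [X in _ <= X]addrC; apply: ler_normB.
Qed.

Lemma local_remainder p q (F : 'cV[R]_p -> 'cV[R]_q) (z0 : 'cV[R]_p) k :
  (forall w, differentiable F w) ->
  {for z0, continuous (Defs.jacobian F)} -> 0 < k ->
  exists2 r : R, 0 < r & forall z h : 'cV[R]_p, `|z - z0| < r -> `|h| < r ->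
    `|F (h + z) - F z - Defs.jacobian F z *m h| <= k * `|h|.
Proof.
move=> dF cJ k0.
have e0 : 0 < k / (2 * (p%:R + 1)).
  by rewrite divr_gt0 // mulr_gt0 // ltr_wpDl.
have [d d0 Hd] := cont_eps cJ e0.
exists (d / 2); first by rewrite divr_gt0.
move=> z h zr hr.
apply: le_trans (remainder_bound (k := 2 * (k / (2 * (p%:R + 1)))) dF _ _) _.
- move=> c /[!in_itv] /= /andP[c0 c1].
  have zz : `|z0 - z| < d.
    by rewrite distrC; apply: lt_le_trans zr _; exact: half_le.
  have H1 : `|z0 - (c *: h + z)| < d.
    rewrite (_ : z0 - (c *: h + z) = (z0 - z) - c *: h); last exact: subDA.
    apply: le_lt_trans (ler_normB _ _) _.
    rewrite normrZ gtr0_norm //.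
    apply: aux_H1 => //; first by rewrite distrC.
    by rewrite ler_piMl // ltW.
  have a1 := Hd _ H1; have a2 := Hd _ zz.
  apply: le_trans (dist_tri _ _ (Defs.jacobian F z0)) _.
  apply: ltW; apply: (lt_le_trans (ltrD a1 a2)); by rewrite -mulr2n [X in _ <= X]mulr_natl.
- by apply: mulr_ge0 => //; apply: ltW.
- rewrite ler_wpM2r //.
  have P1 : p%:R + 1 != 0 :> R by rewrite gt_eqF // ltr_wpDl.
  rewrite (_ : p%:R * (2 * (k / (2 * (p%:R + 1)))) = k * (p%:R / (p%:R + 1))); last first.
    by field; rewrite P1.
  rewrite -[X in _ <= X]mulr1 ler_wpM2l ?ltW //.
  by rewrite ltr_pdivrMr ?ltr_wpDl // mul1r ltrDl.
Qed.

End Calc.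

Section Unif.
Variable R : realType.

Lemma path_uniform (V : normedModType R) (c : R -> V) (cm cp : V)
  (P : R -> V -> Prop) :
  (forall s0 e, 0 < e -> exists2 d : R, 0 < d &
      forall s, `|s - s0| < d -> `|c s - c s0| < e) ->
  (forall e, 0 < e -> exists T : R, forall s, T < s -> `|c s - cp| < e) ->
  (forall e, 0 < e -> exists T : R, forall s, s < T -> `|c s - cm| < e) ->
  (forall z0, exists2 r : R, 0 < r & forall z, `|z - z0| < r ->
      forall rho, 0 < rho -> rho < r -> P rho z) ->
  exists2 rho : R, 0 < rho & forall s, P rho (c s).
Proof.
move=> cc cP cM loc.
have [rp rp0 Hp] := loc cp; have [Tp HTp] := cP _ rp0.
have [rm rm0 Hm] := loc cm; have [Tm HTm] := cM _ rm0.
have K := @segment_compact R Tm Tp.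
move/compact_near_coveringP : K => /(_ R (0^'+) (fun rho s => P rho (c s))) K.
have K' : \forall rho \near 0^'+, `[Tm, Tp] `<=` (fun s => P rho (c s)).
  apply: K => s0 _.
  have [r0 r00 H0] := loc (c s0).
  have [d d0 Hd] := cc s0 _ r00.
  exists ([set s | `|s - s0| < d], [set rho : R | 0 < rho < r0]) => /=.
    split.
    - apply/nbhs_ballP; exists d => //= s; rewrite -ball_normE /= distrC //.
    - near=> rho; apply/andP; split.
        near: rho; exact: nbhs_right_gt.
      near: rho.
      exact: nbhs_right_lt.
  move=> [s rho] /= [/Hd sd /andP[rho0 rhor]].
  exact: H0.
have rpm : 0 < Num.min rp rm by rewrite lt_min rp0 rm0.
have : \forall rho \near 0^'+, [/\ `[Tm, Tp] `<=` (fun s => P rho (c s)),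
    0 < rho & rho < Num.min rp rm].
  near=> rho; split.
  - by near: rho.
  - by near: rho; exact: nbhs_right_gt.
  - by near: rho; exact: nbhs_right_lt.
move=> Hn; have [rho Hr] := @filter_ex _ _ (at_right_proper_filter (0:R)) _ Hn.
case: Hr => Hk rho0 rr.
move: rr; rewrite lt_min => /andP[rhop rhom].
exists rho => // s.
have [sp|] := ltP Tp s; first exact: Hp (HTp _ sp) _ rho0 rhop.
move=> sTp; have [sm|] := ltP s Tm; first exact: Hm (HTm _ sm) _ rho0 rhom.
move=> sTm; apply: Hk; rewrite /= in_itv /=; exact/andP.
Unshelve. all: by end_near.
Qed.

End Unif.

Section Sep.
Variable R : realType.
Variable V : normedModType R.

Lemma g1_cont (sg : R) : continuous (fun p : R * V => sg * p.1).
Proof.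
move=> p; apply: (@continuous_comp _ _ _ fst ( *%R sg)); first exact: cvg_fst.
exact: mulrl_continuous.
Qed.

Lemma g2_cont (x0 : V) : continuous (fun p : R * V => `|p.2 - x0|).
Proof.
move=> p; apply: (@continuous_comp _ _ _ snd (fun x => `|x - x0|)); first exact: cvg_snd.
apply: (@continuous_comp _ _ _ (fun x => x - x0) (@Num.norm _ V)); last exact: norm_continuous.
apply: continuousB => //; exact: cst_continuous.
Qed.

Lemma graph_sep (X : R -> V) (sg s0 s1 d : R) :
  connected [set p : R * V | p.2 = X p.1] -> 0 < d ->
  sg * s0 < sg * s1 ->
  (forall s, sg * s0 <= sg * s -> sg * s <= sg * s1 ->
     `|X s - X s0| < d -> `|X s - X s0| <= d / 2) ->
  d / 2 < `|X s1 - X s0| -> False.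
Proof.
move=> cG d0 s01 H far.
set G := [set p : R * V | p.2 = X p.1].
set x0 := X s0.
pose g1 := fun p : R * V => sg * p.1.
pose g2 := fun p : R * V => `|p.2 - x0|.
pose C := (g1 @^-1` [set y | y < sg * s0]) `|`
          ((g1 @^-1` [set y | y < sg * s1]) `&` (g2 @^-1` [set y | y < d])).
pose D := (g1 @^-1` [set y | y <= sg * s0]) `|`
          ((g1 @^-1` [set y | y <= sg * s1]) `&` (g2 @^-1` [set y | y <= d / 2])).
have oC : open C.
  apply: openU; last apply: openI; apply: open_comp;
    try (by move=> ? _; apply: g1_cont); try (by move=> ? _; apply: g2_cont);
    by [apply: open_lt].
have cD : closed D.
  apply: closedU; last apply: closedI; apply: preimage_closed;
    try (by move=> ? _; apply: g1_cont); try (by move=> ? _; apply: g2_cont);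
    by [apply: closed_le].
have sgn0 : sg != 0.
  by apply/negP => /eqP s0'; move: s01; rewrite s0' !mul0r ltxx.
have E : G `&` C = G `&` D.
  apply/seteqP; split => -[s x] [] xs0; have xs : x = X s := xs0;
    rewrite /g1 /g2 /= => Hc; split => //; rewrite /g1 /g2 /=.
  - case: Hc => [lt|[lt nr]]; first by left; apply: ltW.
    have [le|gt] := leP (sg * s) (sg * s0); first by left.
    right; split; first exact: ltW.
    by rewrite xs; apply: H; [apply: ltW|apply: ltW|rewrite -xs].
  - case: Hc => [le|[le nr]].
      move: le; rewrite /= le_eqVlt => /orP[/eqP e|lt]; last by left.
      right; split; first by rewrite /= e.
      have ss0 : s = s0 by apply: (mulfI sgn0).
      by rewrite /g2 /= xs ss0 /x0 subrr normr0.
    have [lt|ge] := ltP (sg * s) (sg * s0); first by left.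
    right; split.
      rewrite /= lt_neqAle le andbT; apply/negP => /eqP e.
      have ss1 : s = s1 by apply: (mulfI sgn0).
      move: nr far; rewrite /g2 /= xs ss1 /x0 => nr far.
      by have := le_lt_trans nr far; rewrite ltxx.
    by apply: le_lt_trans nr _; rewrite ltr_pdivrMr // ltr_pMr // ltr1n.
have ne : (G `&` C) !=set0.
  exists (s0, x0); split => //; right; split; rewrite /g1 /g2 /= //.
  by rewrite subrr normr0.
have eq := cG (G `&` C) ne (ex_intro2 _ _ C oC erefl) (ex_intro2 _ _ D cD E).
have : (G `&` C) (s1, X s1) by rewrite eq.
case=> _ [|[]]; rewrite /g1 /=.
- by move=> lt; have := lt_trans lt s01; rewrite ltxx.
- by rewrite ltxx.
Qed.

End Sep.

Section IE.
Variable R : realType.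

Lemma pow_bound n (A : 'M[R]_n) k (w : 'cV[R]_n) :
  `|A ^+ k *m w| <= (n%:R * `|A|) ^+ k * `|w|.
Proof.
elim: k => [|k IH]; first by rewrite expr0 mul1r mul1mx.
rewrite exprS -mulmxE -mulmxA exprS -mulrA.
apply: le_trans (mxnorm_mul _ _) _.
by apply: ler_wpM2l => //; rewrite mulr_ge0 ?ler0n.
Qed.

Lemma telesc n N (A : 'M[R]_n) (v : 'cV[R]_n) :
  v - A ^+ N *m v = \sum_(k < N) A ^+ k *m (v - A *m v).
Proof.
elim: N => [|N IH]; first by rewrite big_ord0 expr0 mul1mx subrr.
rewrite big_ord_recr /= -IH mulmxBr mulmxA mulmxE -exprSr.
by rewrite addrA subrK.
Qed.

Lemma aux_IE (a e b t : R) : 0 <= a -> a <= e -> e <= e / 4 + b -> 0 <= t -> a <= 4 * b + t.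
Proof. move=> *; lra. Qed.

Lemma inv_est n N (A : 'M[R]_n) : opnorm (A ^+ N) < 4^-1 ->
  exists2 C : R, 0 < C & forall v : 'cV[R]_n, `|v| <= C * `|v - A *m v|.
Proof.
move=> HN.
set S := \sum_(k < N) (n%:R * `|A|) ^+ k.
have S0 : 0 <= S by apply: sumr_ge0 => k _; rewrite exprn_ge0 ?mulr_ge0 ?ler0n.
exists (4 * (n%:R * S) + 1); first by rewrite ltr_wpDl // mulr_ge0 ?mulr_ge0 ?ler0n.
move=> v; set w := v - A *m v.
have e1 : enorm (A ^+ N *m v) <= enorm v / 4.
  apply: le_trans (opnorm_bound _ _) _.
  rewrite mulrC ler_wpM2l ?enorm_ge0 // ltW // (lt_le_trans HN) //.
have e2 : enorm (v - A ^+ N *m v) <= n%:R * S * `|w|.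
  apply: le_trans (enorm_le_mxnorm _) _.
  rewrite -mulrA ler_wpM2l ?ler0n // telesc -/w.
  apply: le_trans (ler_norm_sum _ _ _) _.
  rewrite /S mulr_suml; apply: ler_sum => k _; exact: pow_bound.
have e3 : enorm v <= enorm v / 4 + n%:R * S * `|w|.
  apply: le_trans (lerD e1 e2).
  have {1}-> : v = (v - A ^+ N *m v) + A ^+ N *m v by rewrite subrK.
  by rewrite addrC; apply: enormD.
rewrite mulrDl mul1r -mulrA.
apply: aux_IE (normr_ge0 v) (mxnorm_le_enorm v) e3 _; exact: normr_ge0.
Qed.

End IE.

Section Mx.
Variable R : realType.

Lemma FE l m (f : 'cV[R]_l -> 'cV[R]_m -> 'cV[R]_l) x w :
  uncurry_f f (col_mx x w) = f x w.
Proof. by rewrite /uncurry_f col_mxKu col_mxKd. Qed.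

Lemma JE l m p (M : 'M[R]_(p, l + m)) (u : 'cV[R]_l) (w : 'cV[R]_m) :
  M *m col_mx u w = lsubmx M *m u + rsubmx M *m w.
Proof. by rewrite -{1}(hsubmxK M) mul_row_col. Qed.

Lemma norm_col l m (u : 'cV[R]_l) (w : 'cV[R]_m) : `|col_mx u w| <= `|u| + `|w|.
Proof.
apply: mxnorm_le; first by rewrite addr_ge0.
move=> i j; rewrite -(splitK i); case: (fintype.split i) => k /=.
- rewrite col_mxEu; apply: le_trans (mxnorm_entry _ _ _) _; by rewrite lerDl.
- rewrite col_mxEd; apply: le_trans (mxnorm_entry _ _ _) _; by rewrite lerDr.
Qed.

Lemma norm_colu l m (u : 'cV[R]_l) (w : 'cV[R]_m) : `|u| <= `|col_mx u w|.
Proof.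
apply: mxnorm_le => // i j.
by rewrite -(col_mxEu u w); exact: mxnorm_entry.
Qed.

Lemma norm_col0 l m (u : 'cV[R]_l) : `|col_mx u (0 : 'cV[R]_m)| = `|u|.
Proof.
apply/eqP; rewrite eq_le norm_colu andbT.
by apply: le_trans (norm_col _ _) _; rewrite normr0 addr0.
Qed.

Lemma norm_lsub a l m (M : 'M[R]_(a, l + m)) : `|lsubmx M| <= `|M|.
Proof.
apply: mxnorm_le => // i j; rewrite mxE; exact: mxnorm_entry.
Qed.

Lemma col_sub l m (a b : 'cV[R]_l) (c d : 'cV[R]_m) :
  col_mx a c - col_mx b d = col_mx (a - b) (c - d).
Proof. by rewrite opp_col_mx add_col_mx. Qed.

Lemma aux_LC (a b t C M : R) : 0 < C -> a <= C * b ->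
  b <= (2 * C)^-1 * a + (2 * C)^-1 * t + M * t -> a <= (1 + 2 * C * M) * t.
Proof.
move=> C0 h1 h2.
have h3 : C * b <= a / 2 + t / 2 + C * M * t.
  apply: le_trans (ler_wpM2l (ltW C0) h2) _.
  have Cn : C != 0 by rewrite gt_eqF.
  by rewrite le_eqVlt; apply/orP; left; apply/eqP; field.
have := le_trans h1 h3; lra.
Qed.

Lemma aux_half (a b r : R) : a < r / 2 -> b < r / 2 -> a + b < r.
Proof. move=> *; lra. Qed.

Lemma aux_btw (s0 s s1 : R) : s0 <= s -> s <= s1 -> `|s - s0| <= `|s1 - s0|.
Proof. by move=> *; rewrite !ger0_norm ?subr_ge0 //; lra. Qed.

Lemma aux_btw' (s0 s s1 : R) : s <= s0 -> s1 <= s -> `|s - s0| <= `|s1 - s0|.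
Proof. by move=> *; rewrite distrC (distrC s1) !ger0_norm ?subr_ge0 //; lra. Qed.

Lemma aux_K1 (K a r : R) : 0 <= K -> 0 <= a -> a < r / (4 * (K + 1)) -> 0 < r -> K * a <= r / 2 / 2.
Proof.
move=> K0 a0 ar r0.
have -> : r / 2 / 2 = r / 4 by field.
have K1 : 0 < K + 1 by lra.
move: ar; rewrite ltr_pdivlMr ?mulr_gt0 // => ar.
rewrite ler_pdivlMr //.
have : K * a <= (K + 1) * a by rewrite ler_wpM2r //; lra.
nra.
Qed.

Lemma pinfty_ex (P : R -> Prop) : (\forall x \near +oo, P x) ->
  exists T : R, forall x, T < x -> P x.
Proof. by move=> [M [_ H]]; exists M. Qed.

Lemma ninfty_ex (P : R -> Prop) : (\forall x \near -oo, P x) ->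
  exists T : R, forall x, x < T -> P x.
Proof. by move=> [M [_ H]]; exists M. Qed.

Lemma aux_cc (K a b e : R) : a <= K * b -> 0 <= b -> b < e / (`|K| + 1) -> 0 < e -> a + b < e.
Proof.
move=> h b0 be e0.
have K1 : 0 < `|K| + 1 by rewrite ltr_wpDl.
move: be; rewrite ltr_pdivlMr // => be.
have : K * b <= `|K| * b by rewrite ler_wpM2r // ler_norm.
nra.
Qed.

Lemma norm_tri (V : normedZmodType R) (a b : V) : `|a| <= `|b| + `|b - a|.
Proof.
by have := ler_normD b (a - b); rewrite addrCA subrr addr0 distrC.
Qed.

Lemma aux_inv (a rho : R) : 0 <= a -> 0 < rho -> rho < (a + 1)^-1 -> a + 1 <= rho^-1.
Proof.
move=> a0 r0 h; rewrite -[X in X <= _]invrK; apply: ltW.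
by rewrite ltf_pV2 ?posrE ?invr_gt0 ?ltr_wpDl.
Qed.

Lemma pow_mono (M : R) (j P : nat) : 1 <= M -> (j <= P)%N -> M ^+ j <= M ^+ P.
Proof.
move=> M1 jP; rewrite -(subnKC jP) exprD ler_peMr ?exprn_ge0 ?exprn_ege1 //.
exact: le_trans ler01 M1.
Qed.

Lemma aux_step (k L j p w : R) : 0 <= k -> 0 <= L -> 0 <= j -> 0 <= p -> 0 <= w ->
  k * (p * w) + L * (j * p * k * w) <= (j + 1) * ((L + 1) * p) * k * w.
Proof.
move=> k0 L0 j0 p0 w0; rewrite -subr_ge0.
have -> : (j + 1) * ((L + 1) * p) * k * w - (k * (p * w) + L * (j * p * k * w))
  = k * p * w * (j + L) by ring.
by rewrite !mulr_ge0 // addr_ge0.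
Qed.

Lemma mono4 (a a' b b' c x x' : R) : 0 <= a -> a <= a' -> 0 <= b -> b <= b' ->
  0 <= c -> 0 <= x -> x <= x' -> a * b * c * x <= a' * b' * c * x'.
Proof.
move=> a0 aa b0 bb c0 x0 xx.
apply: ler_pM; rewrite ?mulr_ge0 //.
apply: ler_pM; rewrite ?mulr_ge0 //.
exact: ler_pM.
Qed.

Lemma aux_Qk (Q eps : R) : 0 <= Q -> 0 <= eps ->
  Q * (12 * (Q + 1))^-1 * eps <= eps / 12.
Proof.
move=> Q0 e0.
have Q1 : 0 < Q + 1 by rewrite ltr_wpDl.
have Qn : Q + 1 != 0 by rewrite gt_eqF.
rewrite [X in _ <= X]mulrC; apply: ler_wpM2r => //.
rewrite (_ : Q * (12 * (Q + 1))^-1 = 12^-1 * (Q / (Q + 1))); last by field.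
rewrite -[X in _ <= X]mulr1; apply: ler_wpM2l; first by rewrite invr_ge0.
by rewrite ler_pdivrMr // mul1r lerDl.
Qed.

Lemma aux_fin (a b eps : R) : a <= eps / 4 -> b <= eps / 12 -> a + b <= eps / 3.
Proof. move=> *; lra. Qed.

End Mx.

Section Main.
Variable R : realType.
Variables (l m : nat) (f : 'cV[R]_l -> 'cV[R]_m -> 'cV[R]_l) (Lam : R -> 'cV[R]_m)
  (lm lp : 'cV[R]_m) (X : R -> 'cV[R]_l) (N : nat).
Hypotheses (hC1 : C1 (uncurry_f f)) (hPS : parameter_shift Lam lm lp)
  (hSP : stable_path f Lam lm lp X)
  (hN : forall (s : R) (n : nat), (N <= n)%N ->
     opnorm ((Dxf f (X s) (Lam s)) ^+ n) < 4^-1).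

Local Notation F := (uncurry_f f).
Local Notation J := (Defs.jacobian (uncurry_f f)).
Local Notation c := (fun s => col_mx (X s) (Lam s)).

Lemma dF : forall w, differentiable F w.
Proof. by case: hC1. Qed.

Lemma cJ : continuous J.
Proof. by case: hC1. Qed.

Lemma fixX s : f (X s) (Lam s) = X s.
Proof. by case: hSP. Qed.

Lemma Lam_cont s0 e : 0 < e -> exists2 d : R, 0 < d &
  forall s, `|s - s0| < d -> `|Lam s - Lam s0| < e.
Proof.
move=> e0.
have cL : {for s0, continuous Lam}.
  apply: differentiable_continuous; apply/derivable1_diffP.
  by case: hPS => H _; exact: H.
have [d d0 Hd] := cont_eps cL e0.
by exists d => // s sd; rewrite distrC; apply: Hd; rewrite distrC.
Qed.




Lemma LC s0 : exists K1 : R, exists2 eta : R, 0 < eta &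
  forall s, `|s - s0| < eta -> `|X s - X s0| <= K1 * `|Lam s - Lam s0|.
Proof.
set A0 := lsubmx (J (c s0)).
have [C C0 HC] := inv_est (hN s0 (leqnn N)).
set B0 := rsubmx (J (c s0)).
set k := (2 * C)^-1.
have k0 : 0 < k by rewrite invr_gt0 mulr_gt0.
have cJ0 : {for (c s0), continuous J} by apply: cJ.
have [r r0 Hr] := local_remainder dF cJ0 k0.
set M := m%:R * `|B0|.
have M0 : 0 <= M by rewrite mulr_ge0 ?ler0n.
set K1 := 1 + 2 * C * M.
have K10 : 0 <= K1 by rewrite addr_ge0 // !mulr_ge0 // ltW.
have KC : forall s, `|X s - X s0| < r / 2 -> `|Lam s - Lam s0| < r / 2 ->
    `|X s - X s0| <= K1 * `|Lam s - Lam s0|.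
  move=> s hv hw.
  set v := X s - X s0; set w := Lam s - Lam s0.
  have hh : `|col_mx v w| < r.
    by apply: le_lt_trans (norm_col _ _) _; exact: aux_half.
  have z00 : `|c s0 - c s0| < r by rewrite subrr normr0.
  have := Hr (c s0) (col_mx v w) z00 hh.
  rewrite add_col_mx !subrK !FE !fixX JE -/A0 -/B0 => H.
  apply: (aux_LC C0 (HC v)).
  rewrite (_ : v - A0 *m v = (v - (A0 *m v + B0 *m w)) + B0 *m w); last first.
    by rewrite opprD addrA subrK.
  apply: le_trans (ler_normD _ _) _.
  rewrite -mulrDr; apply: lerD.
    by apply: le_trans H _; apply: ler_wpM2l; [exact: ltW | exact: norm_col].
  by apply: le_trans (mxnorm_mul _ _) _.
set d := r / 2.
have d0 : 0 < d by rewrite divr_gt0.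
set e := Num.min (r / 2) (r / (4 * (K1 + 1))).
have e0 : 0 < e by rewrite lt_min d0 divr_gt0 // mulr_gt0 // ltr_wpDl.
have [eta eta0 Heta] := Lam_cont s0 e0.
exists K1, eta => // s ss.
have claim : forall s1, `|s1 - s0| < eta -> `|X s1 - X s0| < d.
  move=> s1 s1e; rewrite ltNge; apply/negP => far.
  have hyp : forall s2, `|s2 - s0| <= `|s1 - s0| -> `|X s2 - X s0| < d ->
      `|X s2 - X s0| <= d / 2.
    move=> s2 s2b hv.
    have := Heta s2 (le_lt_trans s2b s1e); rewrite lt_min => /andP[hw1 hw2].
    apply: le_trans (KC s2 hv hw1) _.
    exact: aux_K1.
  have fard : d / 2 < `|X s1 - X s0|.
    by apply: lt_le_trans far; rewrite ltr_pdivrMr // ltr_pMr // ltr1n.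
  have cG : connected [set p : R * 'cV[R]_l | p.2 = X p.1] by case: hSP => _ [].
  case: (ltgtP s0 s1) => [lt|gt|eq].
  - apply: (@graph_sep _ _ X 1 s0 s1 d cG d0 _ _ fard); first by rewrite !mul1r.
    move=> s2; rewrite !mul1r => h1 h2; apply: hyp; exact: aux_btw.
  - apply: (@graph_sep _ _ X (-1) s0 s1 d cG d0 _ _ fard); first by rewrite !mulN1r ltrN2.
    move=> s2; rewrite !mulN1r !lerN2 => h1 h2; apply: hyp; exact: aux_btw'.
  - by move: far; rewrite -eq subrr normr0 leNgt d0.
have := Heta s ss; rewrite lt_min => /andP[hw1 _].
exact: KC (claim s ss) hw1.
Qed.

Lemma c_cont s0 e : 0 < e -> exists2 d : R, 0 < d &
  forall s, `|s - s0| < d -> `|c s - c s0| < e.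
Proof.
move=> e0.
have [K1 [eta eta0 Heta]] := LC s0.
have e1 : 0 < e / (`|K1| + 1) by rewrite divr_gt0 // ltr_wpDl.
have [d d0 Hd] := Lam_cont s0 e1.
exists (Num.min eta d); first by rewrite lt_min eta0 d0.
move=> s; rewrite lt_min => /andP[h1 h2].
rewrite col_sub; apply: le_lt_trans (norm_col _ _) _.
exact: aux_cc (Heta s h1) (normr_ge0 _) (Hd s h2) e0.
Qed.

Lemma c_tails : exists (cm cp : 'cV[R]_(l + m)),
  (forall e, 0 < e -> exists T : R, forall s, T < s -> `|c s - cp| < e) /\
  (forall e, 0 < e -> exists T : R, forall s, s < T -> `|c s - cm| < e).
Proof.
case: hSP => _ [_ [Xm [Xp [HXm [HXp _]]]]].
case: hPS => _ [_ [HLm [HLp _]]].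
exists (col_mx Xm lm), (col_mx Xp lp); split => e e0.
- have e2 : 0 < e / 2 by rewrite divr_gt0.
  have [T1 H1] := pinfty_ex ((cvgrPdist_lt _ _).1 HXp _ e2).
  have [T2 H2] := pinfty_ex ((cvgrPdist_lt _ _).1 HLp _ e2).
  exists (Num.max T1 T2) => s; rewrite gt_max => /andP[s1 s2].
  rewrite col_sub; apply: le_lt_trans (norm_col _ _) _.
  by apply: aux_half; rewrite distrC; [exact: H1 | exact: H2].
- have e2 : 0 < e / 2 by rewrite divr_gt0.
  have [T1 H1] := ninfty_ex ((cvgrPdist_lt _ _).1 HXm _ e2).
  have [T2 H2] := ninfty_ex ((cvgrPdist_lt _ _).1 HLm _ e2).
  exists (Num.min T1 T2) => s; rewrite lt_min => /andP[s1 s2].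
  rewrite col_sub; apply: le_lt_trans (norm_col _ _) _.
  by apply: aux_half; rewrite distrC; [exact: H1 | exact: H2].
Qed.

Lemma unifL : exists2 L : R, 0 <= L & forall s, `|J (c s)| <= L.
Proof.
have [cm [cp [Hp Hm]]] := c_tails.
have loc : forall z0, exists2 r : R, 0 < r & forall z, `|z - z0| < r ->
      forall rho, 0 < rho -> rho < r -> `|J z| <= rho^-1.
  move=> z0.
  have cJ0 : {for z0, continuous J} by apply: cJ.
  have [d d0 Hd] := cont_eps cJ0 ltr01.
  have q0 : 0 < (`|J z0| + 1)^-1 by rewrite invr_gt0 ltr_wpDl.
  exists (Num.min d (`|J z0| + 1)^-1); first by rewrite lt_min d0 q0.
  move=> z; rewrite lt_min => /andP[zd _] rho rho0; rewrite lt_min => /andP[_ rq].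
  have zd' : `|z0 - z| < d by rewrite distrC.
  have h1 : `|J z| <= `|J z0| + 1.
    apply: le_trans (norm_tri (J z) (J z0)) _.
    by apply: lerD => //; apply: ltW; apply: Hd.
  apply: le_trans h1 _.
  exact: aux_inv.
have [rho rho0 H] := @path_uniform R _ c cm cp
  (fun rho z => `|J z| <= rho^-1) c_cont Hp Hm loc.
by exists rho^-1 => //; rewrite invr_ge0 ltW.
Qed.

Lemma unifR k : 0 < k -> exists2 rho : R, 0 < rho & forall s (h : 'cV[R]_(l + m)),
  `|h| <= rho -> `|F (h + c s) - F (c s) - J (c s) *m h| <= k * `|h|.
Proof.
move=> k0.
have [cm [cp [Hp Hm]]] := c_tails.
have loc : forall z0, exists2 r : R, 0 < r & forall z, `|z - z0| < r ->
      forall rho, 0 < rho -> rho < r -> forall h : 'cV[R]_(l + m), `|h| <= rho ->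
     `|F (h + z) - F z - J z *m h| <= k * `|h|.
  move=> z0.
  have cJ0 : {for z0, continuous J} by apply: cJ.
  have [r r0 Hr] := local_remainder dF cJ0 k0.
  exists r => // z zr rho rho0 rhor h hr.
  by apply: Hr => //; apply: le_lt_trans hr rhor.
have [rho rho0 H] := @path_uniform R _ c cm cp
  (fun rho z => forall h : 'cV[R]_(l + m), `|h| <= rho ->
     `|F (h + z) - F z - J z *m h| <= k * `|h|) c_cont Hp Hm loc.
by exists rho.
Qed.

Lemma iter_est : exists2 eps0 : R, 0 < eps0 & forall eps, 0 < eps -> eps <= eps0 ->
  forall n, (N <= n <= N * N.+1)%N -> forall s x, enorm (x - X s) <= eps ->
  enorm (iter n (fun y => f y (Lam s)) x - X s) <= eps / 3.
Proof.
have [L L0 HL] := unifL.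
set P := (N * N.+1)%N.
set L' := l%:R * L.
have L'0 : 0 <= L' by rewrite mulr_ge0 ?ler0n.
set M := L' + 1.
have M1 : 1 <= M by rewrite lerDr.
have M0 : 0 <= M by exact: le_trans ler01 M1.
set Q := l%:R * (P%:R * M ^+ P).
have Q0 : 0 <= Q by rewrite !mulr_ge0 ?ler0n ?exprn_ge0.
set k := (12 * (Q + 1))^-1.
have k0 : 0 < k by rewrite invr_gt0 mulr_gt0 // ltr_wpDl.
have k1 : k <= 1.
  rewrite invf_le1 ?mulr_gt0 ?ltr_wpDl //.
  apply: (le_trans (y := Q + 1)); first by rewrite lerDr.
  by rewrite ler_peMl ?addr_ge0 // ler1n.
have [rho rho0 Hrho] := unifR k0.
have MP0 : 0 < M ^+ P by rewrite exprn_gt0 // (lt_le_trans ltr01 M1).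
exists (rho / M ^+ P); first by rewrite divr_gt0.
move=> eps eps0 epsle n /andP[Nn nP] s x ex.
set A := lsubmx (J (c s)).
pose g := fun y => f y (Lam s).
pose e := fun j => iter j g x - X s.
have HA : forall y : 'cV[R]_l, `|A *m y| <= L' * `|y|.
  move=> y; apply: le_trans (mxnorm_mul _ _) _.
  rewrite ler_wpM2r // ler_wpM2l ?ler0n //.
  exact: le_trans (norm_lsub _) (HL s).
have step : forall j, `|e j| <= rho -> `|e j.+1 - A *m e j| <= k * `|e j|.
  move=> j hj.
  have h0 : `|col_mx (e j) (0 : 'cV[R]_m)| <= rho by rewrite norm_col0.
  have := Hrho s _ h0.
  rewrite add_col_mx add0r /e subrK !FE fixX JE mulmx0 addr0 norm_col0.
  by [].
have e0le : `|e 0%N| <= eps by apply: le_trans (mxnorm_le_enorm _) ex.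
have e0rho : M ^+ P * `|e 0%N| <= rho.
  rewrite mulrC -ler_pdivlMr //; apply: le_trans e0le epsle.
have ind : forall j, (j <= P)%N -> `|e j| <= M ^+ j * `|e 0%N| /\
    `|e j - A ^+ j *m e 0%N| <= j%:R * M ^+ j * k * `|e 0%N|.
  elim=> [|j IH] hj.
    split; first by rewrite expr0 mul1r.
    by rewrite expr0 mul1mx subrr normr0 mul0r !mul0r.
  have [IH1 IH2] := IH (ltnW hj).
  have ej : `|e j| <= rho.
    apply: le_trans IH1 _; apply: le_trans e0rho.
    by rewrite ler_wpM2r // pow_mono // ltnW.
  have sj := step j ej.
  have dec : e j.+1 = (e j.+1 - A *m e j) + A *m e j by rewrite subrK.
  split.
    rewrite dec; apply: le_trans (ler_normD _ _) _.
    apply: le_trans (lerD sj (HA _)) _.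
    rewrite -mulrDl exprS -mulrA; apply: ler_pM => //.
      by rewrite addr_ge0 // ltW.
    by rewrite addrC lerD2l.
  have dec2 : e j.+1 - A ^+ j.+1 *m e 0%N =
      (e j.+1 - A *m e j) + A *m (e j - A ^+ j *m e 0%N).
    by rewrite (mulmxBr A (e j) (A ^+ j *m e 0%N)) (mulmxA A (A ^+ j) (e 0%N)) mulmxE -exprS addrA subrK.
  rewrite dec2; apply: le_trans (ler_normD _ _) _.
  apply: le_trans (lerD sj (HA _)) _.
  apply: le_trans (lerD (ler_wpM2l (ltW k0) IH1) (ler_wpM2l L'0 IH2)) _.
  rewrite -natr1 exprS.
  exact: aux_step (ltW k0) L'0 (ler0n _ _) (exprn_ge0 _ M0) (normr_ge0 _).
have [_ Hn] := ind n nP.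
have dec : e n = A ^+ n *m e 0%N + (e n - A ^+ n *m e 0%N) by rewrite addrC subrK.
change (enorm (e n) <= eps / 3); rewrite dec.
apply: le_trans (enormD _ _) _; apply: aux_fin.
  apply: le_trans (opnorm_bound _ _) _.
  have hn : opnorm (A ^+ n) < 4^-1 := hN s Nn.
  apply: (@le_trans _ _ (4^-1 * enorm (e 0%N))).
    by rewrite ler_wpM2r ?enorm_ge0 // ltW.
  by rewrite mulrC ler_wpM2r // invr_ge0.
apply: le_trans (enorm_le_mxnorm _) _.
have h1 : n%:R * M ^+ n * k * `|e 0%N| <= P%:R * M ^+ P * k * eps.
  apply: mono4 => //; rewrite ?ler0n ?ler_nat ?exprn_ge0 ?pow_mono //; exact: ltW.
apply: le_trans (ler_wpM2l (ler0n _ _) (le_trans Hn h1)) _.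
have -> : l%:R * (P%:R * M ^+ P * k * eps) = Q * k * eps by rewrite /Q !mulrA.
exact: aux_Qk Q0 (ltW eps0).
Qed.

End Main.
Unset Implicit Arguments.
Set Strict Implicit.

Lemma iterFr (R : realType) l m (f : 'cV[R]_l -> 'cV[R]_m -> 'cV[R]_l) Lam n s x :
  iter n (Fr f Lam 0) (s, x) = (s, iter n (fun y => f y (Lam s)) x).
Proof. by elim: n => //= n ->; rewrite /Fr /= addr0. Qed.

Theorem mainTheorem11 (R : realType) (l m : nat)
  (f : 'cV[R]_l -> 'cV[R]_m -> 'cV[R]_l) (Lam : R -> 'cV[R]_m)
  (lm lp : 'cV[R]_m) (X : R -> 'cV[R]_l) (N : nat) :
  C1 (uncurry_f f) ->
  parameter_shift Lam lm lp ->
  stable_path f Lam lm lp X ->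
  (forall (s : R) (n : nat), (N <= n)%N ->
     opnorm ((Dxf f (X s) (Lam s)) ^+ n) < 4^-1) ->
  exists2 eps0 : R, 0 < eps0 &
    forall eps : R, 0 < eps -> eps <= eps0 ->
      forall n : nat, (N <= n <= N * N.+1)%N ->
        iter n (Fr f Lam 0) @` Neps X eps `<=` Neps X (eps / 3).
Proof.
move=> hC1 hPS hSP hN.
have [eps0 e0 H] := iter_est hC1 hPS hSP hN.
exists eps0 => // eps eps_pos epsle n hn _ [[s x] Hp <-].
rewrite iterFr /Neps /=.
exact: H.
Qed.
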